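(* Let $A(t)$ be a holomorphic $2\times2$ matrix function on $|t|\le1$ with $A(0)=\operatorname{diag}(1,-1)$. Let $$\dot z=\frac{A(t,\varepsilon)}{(t-\alpha_0(\varepsilon))(t-\alpha_1(\varepsilon))}\,z$$ be a generic deformation of $\dot z=t^{-2}A(t)z$ with $\operatorname{Im}\alpha_0(\varepsilon)>0$. Set $t_0=-\frac12$ and let $M_0,M_1$ be the monodromy operators of the perturbed equation on $H_{t_0}$, with eigenvalues $\lambda_{i1},\lambda_{i2}$ of $M_i$ numbered as in the context. Then, as $\varepsilon\to0$, $$\lambda_{01},\lambda_{12}\to\infty,\qquad \lambda_{02},\lambda_{11}\to 0,$$ $$\ln\lambda_{01}=-(1+o(1))\ln\lambda_{02}=-(1+o(1))\ln\lambda_{11}=(1+o(1))\ln\lambda_{12}.$$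
   Context: Deformation: $A(t,\varepsilon)$ is holomorphic in $t$ on $|t|\le1$ and continuous in $\varepsilon\ge0$, $A(t,0)=A(t)$; $\alpha_0,\alpha_1$ are continuous, $\alpha_0+\alpha_1\equiv0$, $\alpha_i(0)=0$, $\alpha_0(\varepsilon)\ne\alpha_1(\varepsilon)$ for $\varepsilon>0$. Generic: the line through $\alpha_0(\varepsilon),\alpha_1(\varepsilon)$ intersects the real axis at an angle bounded away from $0$ uniformly in $\varepsilon>0$. Monodromy: $H_{t_0}$ is the space of local solutions at $t_0$. For $i=0,1$, let $l_i$ be a small counterclockwise circle around $\alpha_i(\varepsilon)$ whose closed disc does not contain $\alpha_{1-i}(\varepsilon)$, and let $a_i=[t_0,\alpha_i]\cap l_i$. $M_i$ is the monodromy of the perturbed equation along $[t_0,a_i]\circ l_i\circ[t_0,a_i]^{-1}$. Numbering: let $\kappa_{i1}(\varepsilon),\kappa_{i2}(\varepsilon)$ be the eigenvalues of $A(\alpha_i(\varepsilon),\varepsilon)$, numbered so that $\kappa_{i1}\to1$ and $\kappa_{i2}\to-1$. The characteristic numbers of the Fuchsian point $\alpha_i$ are $\rho_{ij}=\kappa_{ij}/(\alpha_i-\alpha_{1-i})$. The eigenvalue of $M_i$ corresponding to $\rho_{ij}$ is $\lambda_{ij}=\exp(2\pi i\rho_{ij})$, and $\ln\lambda_{ij}$ denotes the determination $2\pi i\rho_{ij}$. *)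

(* Defs.v *)
From HB Require Import structures.
From mathcomp Require Import all_boot all_order all_algebra.
From mathcomp Require Import all_classical all_reals all_analysis.
From mathcomp Require Import complex.
Import Order.TTheory GRing.Theory Num.Theory.
Import numFieldNormedType.Exports.
Local Open Scope ring_scope.
Local Open Scope complex_scope.

Set Implicit Arguments. Unset Strict Implicit. Unset Printing Implicit Defensive.

Definition cexp (R : realType) (z : R[i]) : R[i] :=
  (expR (complex.Re z))%:C * ((cos (complex.Im z))%:C + 'i * (sin (complex.Im z))%:C).

Definition char_rho (R : realType) (kappa ai aj : R[i]) : R[i] := kappa / (ai - aj).
Definition ln_lambda (R : realType) (kappa ai aj : R[i]) : R[i] :=
  2%:R * (pi : R)%:C * 'i * char_rho kappa ai aj.
Definition mon_eig (R : realType) (kappa ai aj : R[i]) : R[i] :=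
  cexp (ln_lambda kappa ai aj).

Definition holo_entries (R : realType) (F : R[i] -> 'M[R[i]]_2) : Prop :=
  forall (i j : 'I_2) (t : R[i]), Normc.normc t <= 1 ->
    derivable (fun s : (R[i])^o => (F s i j : (R[i])^o)) t 1.

Definition diag1m1 (R : realType) : 'M[R[i]]_2 :=
  \matrix_(i < 2, j < 2) (if i == j then (if i == 0 :> nat then 1 else -1) else 0).

(* Main.v *)
Require Import Defs.
From HB Require Import structures.
From mathcomp Require Import all_boot all_order all_algebra.
From mathcomp Require Import all_classical all_reals all_analysis.
From mathcomp Require Import complex.
From mathcomp Require Import ring lra.
Import Order.TTheory GRing.Theory Num.Theory.
Import numFieldNormedType.Exports.
Local Open Scope ring_scope.
Local Open Scope classical_set_scope.

Section S.
Local Open Scope complex_scope.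
Variable R : realType.

Lemma normC_def (z : R[i]) : `|z| = (Normc.normc z)%:C.
Proof. by case: z. Qed.

Lemma cvgCP {T} {F : set_system T} {FF : Filter F} (f : T -> R[i]^o) (l : R[i]^o) :
  f @ F --> l <-> forall r : R, 0 < r -> \forall t \near F, Normc.normc (l - f t) < r.
Proof.
rewrite cvgrPdist_lt; split.
- move=> H r r0; have := H r%:C; rewrite ltcR => /(_ r0).
  by apply: filter_app; near=> t => /=; rewrite normC_def ltcR.
- move=> H eps; rewrite ltcE /= => /andP[/eqP Hi Hr].
  have := H _ Hr; apply: filter_app; near=> t.
  have -> : eps = (complex.Re eps)%:C by case: eps Hi Hr => a b /= ->.
  by rewrite normC_def ltcR.
Unshelve. all: by end_near. Qed.

Lemma normc_ge_Re (z : R[i]) : `|complex.Re z| <= Normc.normc z.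
Proof.
case: z => a b /=; rewrite -sqrtr_sqr ler_sqrt ?lerDl ?sqr_ge0 //.
by rewrite addr_ge0 ?sqr_ge0.
Qed.

Lemma normc_ge_Im (z : R[i]) : `|complex.Im z| <= Normc.normc z.
Proof.
case: z => a b /=; rewrite -sqrtr_sqr ler_sqrt ?lerDr ?sqr_ge0 //.
by rewrite addr_ge0 ?sqr_ge0.
Qed.

Lemma normc_sqr (z : R[i]) : Normc.normc z ^+ 2 = complex.Re z ^+ 2 + complex.Im z ^+ 2.
Proof. by case: z => a b /=; rewrite sqr_sqrtr // addr_ge0 ?sqr_ge0. Qed.

Lemma normc_cexp (z : R[i]) : Normc.normc (cexp z) = expR (complex.Re z).
Proof.
rewrite /cexp Normc.normcM.
have -> : Normc.normc (expR (complex.Re z))%:C = expR (complex.Re z).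
  by rewrite /= expr0n addr0 sqrtr_sqr ger0_norm // ltW // expR_gt0.
suff -> : Normc.normc ((cos (complex.Im z))%:C + 'i * (sin (complex.Im z))%:C) = 1 by rewrite mulr1.
by rewrite /= !mul0r !mul1r !subr0 !add0r !addr0 cos2Dsin2 sqrtr1.
Qed.

Lemma Re_ln (k d : R[i]) :
  complex.Re (2%:R * (pi : R)%:C * 'i * (k / d)) =
  2 * pi * (complex.Re k * complex.Im d - complex.Im k * complex.Re d)
   / (complex.Re d ^+ 2 + complex.Im d ^+ 2).
Proof.
case: k => a b; case: d => c e /=.
idtac.
rewrite /GRing.exp /=; ring.
Qed.
Lemma real_key (s σ c kr ki Dr Di n δ: R) : s^+2= 1 -> σ^+2= 1 -> 0<c -> 0 <= n -> `|Dr| <= n -> c*n <= σ*Di -> `|kr - s| < δ -> `|ki| < δ -> δ <= 1/2 -> δ <= c/4 -> c*n/4 <= s*σ*(kr*Di - ki*Dr).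
Proof.
move=> hs hσ c0 n0 hDr hDi hk hki d1 d2.
have as1 : `|s| = 1 by apply/eqP; rewrite -(@eqrXn2 _ 2) ?normr_ge0 // real_normK ?num_real // hs expr1n.
have aσ1 : `|σ| = 1 by apply/eqP; rewrite -(@eqrXn2 _ 2) ?normr_ge0 // real_normK ?num_real // hσ expr1n.
have h1 : 1/2 <= s * kr.
  have -> : s * kr = 1 + s * (kr - s) by rewrite mulrBr -expr2 hs; ring.
  have : `|s * (kr - s)| < 1/2 by rewrite normrM as1 mul1r; lra.
  rewrite ltr_norml => /andP[h _]; lra.
have h2 : 1/2 * (c * n) <= (s * kr) * (σ * Di).
  apply: ler_pM => //; try lra; exact: mulr_ge0 (ltW c0) n0.
have h3 : `|s * σ * ki * Dr| <= c / 4 * n.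
  rewrite !normrM as1 aσ1 !mul1r; apply: ler_pM => //; lra.
have -> : s*σ*(kr*Di - ki*Dr) = (s * kr) * (σ * Di) - s * σ * ki * Dr by ring.
move: h3; rewrite ler_norml => /andP[_ h3]; lra.
Qed.

Lemma key_lim (k D : R -> R[i]) (s σ c : R) :
  s^+2 = 1 -> σ^+2 = 1 -> 0 < c ->
  (k e @[e --> 0^'+] --> (s%:C : R[i]^o)) ->
  (forall r, 0 < r -> \forall e \near 0^'+, Normc.normc (D e) < r) ->
  (forall e, 0 < e -> D e != 0) ->
  (forall e, 0 < e -> c * Normc.normc (D e) <= σ * complex.Im (D e)) ->
  forall M : R, \forall e \near 0^'+,
    M <= s * σ * complex.Re (2%:R * (pi : R)%:C * 'i * (k e / D e)).
Proof.
move=> hs hσ c0 /cvgCP hk hD hD0 hg M.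
set δ := Order.min (1/2 : R) (c/4).
have δ0 : 0 < δ by rewrite lt_min; apply/andP; split; lra.
have r0 : 0 < pi * c / (2 * (`|M| + 1)).
  have p0 : (0 : R) < pi := pi_gt0 R.
  have m0 : 0 <= `|M| := normr_ge0 M.
  apply: divr_gt0; [exact: mulr_gt0 | lra].
near=> e.
have pe : 0 < e by near: e; exact: nbhs_right_gt.
have h1 : Normc.normc (s%:C - k e) < δ by near: e; exact: hk.
have h2 : Normc.normc (D e) < pi * c / (2 * (`|M| + 1)) by near: e; exact: hD.
rewrite Re_ln.
set n := Normc.normc (D e).
have n0 : 0 < n.
  rewrite lt_neqAle; apply/andP; split.
    by apply/eqP => /esym /Normc.eq0_normc /eqP; apply/negP; exact: hD0.
  by rewrite /n; case: (D e) => a b /=; exact: sqrtr_ge0.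
rewrite -normc_sqr -/n.
have hkr : `|complex.Re (k e) - s| < δ.
  apply: le_lt_trans h1; rewrite -normrN opprB.
  by have := normc_ge_Re (s%:C - k e); rewrite raddfB.
have hki : `|complex.Im (k e)| < δ.
  apply: le_lt_trans h1; rewrite -normrN.
  by have := normc_ge_Im (s%:C - k e); rewrite raddfB /= sub0r.
have dl1 : δ <= 1/2 by rewrite ge_min lexx.
have dl2 : δ <= c/4 by rewrite ge_min lexx orbT.
have key := @real_key s σ c _ _ _ _ n δ hs hσ c0 (ltW n0) (normc_ge_Re (D e)) (hg _ pe) hkr hki
  dl1 dl2.
have p0 : (0 : R) < pi := pi_gt0 R.
have m0 : 0 <= `|M| := normr_ge0 M.
have hM : M <= `|M| := ler_norm M.
have e1 : pi * c / (2 * n) <=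
   s * σ * (2 * pi * (complex.Re (k e) * complex.Im (D e) - complex.Im (k e) * complex.Re (D e)) / n ^+ 2).
  have -> : s * σ * (2 * pi * (complex.Re (k e) * complex.Im (D e) - complex.Im (k e) * complex.Re (D e)) / n ^+ 2)
    = (2 * pi / n ^+ 2) * (s * σ * (complex.Re (k e) * complex.Im (D e) - complex.Im (k e) * complex.Re (D e))) by ring.
  have -> : pi * c / (2 * n) = (2 * pi / n ^+ 2) * (c * n / 4).
    field; do ?[apply/andP; split]; rewrite ?gt_eqF //; lra.
  apply: ler_wpM2l => //.
  by apply: divr_ge0; [lra | exact: sqr_ge0].
have e2 : `|M| + 1 < pi * c / (2 * n).
  rewrite ltr_pdivlMr; last lra.
  move: h2; rewrite ltr_pdivlMr; last lra.
  move=> h2.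
  have -> : (`|M| + 1) * (2 * n) = Normc.normc (D e) * (2 * (`|M| + 1)) by rewrite /n; ring.
  exact: h2.
lra.
Unshelve. all: by end_near. Qed.

Lemma ne0_of_close (l x : R[i]) : Normc.normc (l - x) < Normc.normc l -> x != 0.
Proof. by apply: contraTneq => ->; rewrite subr0 ltxx. Qed.

Lemma expR_small (x r : R) : 0 < r -> 1 / r <= - x -> expR x < r.
Proof.
move=> r0 h.
have h' : 1 <= r * - x.
  have := ler_wpM2l (ltW r0) h.
  by have -> : r * (1 / r) = 1 by field; rewrite gt_eqF.
have hx : expR x = (expR (- x))^-1 by rewrite expRN invrK.
have := expR_ge1Dx (- x).
have := expR_gt0 (- x).
rewrite hx => g0 g1.
rewrite -[_^-1]mul1r ltr_pdivrMr //.
nra.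
Qed.

End S.

Theorem proposition3p3 (R : realType)
  (A0 : R[i] -> 'M[R[i]]_2) (A : R[i] -> R -> 'M[R[i]]_2)
  (alpha0 alpha1 : R -> R[i]^o)
  (k01 k02 k11 k12 : R -> R[i]^o)
  (* A(t) holomorphic on |t| <= 1, A(0) = diag(1,-1) *)
  (hA0 : holo_entries A0)
  (hA00 : A0 0 = diag1m1 R)
  (* A(t,eps) holomorphic in t on |t| <= 1, continuous in eps >= 0, A(t,0) = A(t) *)
  (hAhol : forall e : R, 0 <= e -> holo_entries (fun t => A t e))
  (hAcont : forall i j : 'I_2,
     {within [set p : R[i]^o * R | Normc.normc (p.1 : R[i]) <= 1 /\ 0 <= p.2],
        continuous (fun p : R[i]^o * R => (A p.1 p.2 i j : R[i]^o))})
  (hAA0 : forall t : R[i], Normc.normc t <= 1 -> A t 0 = A0 t)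
  (* the singular points alpha_0, alpha_1 *)
  (hal0c : {within `[0, +oo[, continuous alpha0})
  (hal1c : {within `[0, +oo[, continuous alpha1})
  (halsum : forall e : R, 0 <= e -> alpha0 e + alpha1 e = 0)
  (hal00 : alpha0 0 = 0) (hal10 : alpha1 0 = 0)
  (halne : forall e : R, 0 < e -> alpha0 e != alpha1 e)
  (* genericity: the line through alpha_0, alpha_1 meets the real axis at an
     angle bounded away from 0, uniformly in eps > 0 *)
  (hgen : exists2 c : R, 0 < c & forall e : R, 0 < e ->
     c * Normc.normc (alpha0 e - alpha1 e) <= `|complex.Im (alpha0 e - alpha1 e)|)
  (* Im alpha_0(eps) > 0 *)
  (himal : forall e : R, 0 < e -> 0 < complex.Im (alpha0 e))
  (* kappa_{i1}, kappa_{i2} are the eigenvalues of A(alpha_i(eps), eps) *)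
  (hk0 : forall e : R, 0 < e ->
     char_poly (A (alpha0 e) e) = ('X - (k01 e)%:P) * ('X - (k02 e)%:P))
  (hk1 : forall e : R, 0 < e ->
     char_poly (A (alpha1 e) e) = ('X - (k11 e)%:P) * ('X - (k12 e)%:P))
  (* numbering: kappa_{i1} -> 1, kappa_{i2} -> -1 *)
  (hk01 : k01 e @[e --> 0^'+] --> (1 : R[i]^o))
  (hk02 : k02 e @[e --> 0^'+] --> (-1 : R[i]^o))
  (hk11 : k11 e @[e --> 0^'+] --> (1 : R[i]^o))
  (hk12 : k12 e @[e --> 0^'+] --> (-1 : R[i]^o)) :
  let lam01 e := mon_eig (k01 e) (alpha0 e) (alpha1 e) in
  let lam02 e := mon_eig (k02 e) (alpha0 e) (alpha1 e) in
  let lam11 e := mon_eig (k11 e) (alpha1 e) (alpha0 e) in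
  let lam12 e := mon_eig (k12 e) (alpha1 e) (alpha0 e) in
  let L01 e := ln_lambda (k01 e) (alpha0 e) (alpha1 e) in
  let L02 e := ln_lambda (k02 e) (alpha0 e) (alpha1 e) in
  let L11 e := ln_lambda (k11 e) (alpha1 e) (alpha0 e) in
  let L12 e := ln_lambda (k12 e) (alpha1 e) (alpha0 e) in
  [/\ Normc.normc (lam01 e) @[e --> 0^'+] --> +oo,
      Normc.normc (lam12 e) @[e --> 0^'+] --> +oo,
      (lam02 e : R[i]^o) @[e --> 0^'+] --> (0 : R[i]^o),
      (lam11 e : R[i]^o) @[e --> 0^'+] --> (0 : R[i]^o) &
      exists f1 f2 f3 : R -> R[i]^o,
        [/\ f1 e @[e --> 0^'+] --> (0 : R[i]^o),
            f2 e @[e --> 0^'+] --> (0 : R[i]^o),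
            f3 e @[e --> 0^'+] --> (0 : R[i]^o) &
            \forall e \near 0^'+,
              [/\ L01 e = - (1 + f1 e) * L02 e,
                  L01 e = - (1 + f2 e) * L11 e &
                  L01 e = (1 + f3 e) * L12 e]]].
Proof.
move=> lam01 lam02 lam11 lam12 L01 L02 L11 L12.
case: hgen => c c0 hg.
have hα : alpha0 x @[x --> 0^'+] --> (0 : R[i]^o).
  by have [_] := (continuous_within_itvcyP 0 alpha0).1 hal0c; rewrite hal00.
have hdα : forall e, 0 <= e -> alpha0 e - alpha1 e = alpha0 e *+ 2.
  move=> e e0; have := halsum e e0; rewrite addrC => /eqP; rewrite addr_eq0 => /eqP ->.
  by rewrite opprK mulr2n.
have hD : forall r, 0 < r -> \forall e \near 0^'+, Normc.normc (alpha0 e - alpha1 e) < r.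
  move=> r r0; have /cvgCP/(_ (r/2)) := hα.
  have r20 : 0 < r / 2 by lra.
  move=> /(_ r20); apply: filter_app; near=> e => h.
  have pe : 0 < e by near: e; exact: nbhs_right_gt.
  rewrite hdα ?ltW // normcMn mulr2n; move: h; rewrite sub0r normcN; lra.
have hD' : forall r, 0 < r -> \forall e \near 0^'+, Normc.normc (alpha1 e - alpha0 e) < r.
  move=> r /hD; apply: filter_app; near=> e => h.
  have -> : alpha1 e - alpha0 e = -(alpha0 e - alpha1 e) by rewrite opprB.
  by rewrite normcN.
have hDne : forall e, 0 < e -> alpha0 e - alpha1 e != 0.
  by move=> e /halne; rewrite subr_eq0.
have hDne' : forall e, 0 < e -> alpha1 e - alpha0 e != 0.
  by move=> e /halne; rewrite subr_eq0 eq_sym.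
have hIm : forall e, 0 < e -> c * Normc.normc (alpha0 e - alpha1 e) <= 1 * complex.Im (alpha0 e - alpha1 e).
  move=> e e0; have := hg e e0; rewrite mul1r ger0_norm //.
  by rewrite hdα ?ltW // raddfMn /= mulr2n; have := himal e e0; lra.
have hIm' : forall e, 0 < e -> c * Normc.normc (alpha1 e - alpha0 e) <= -1 * complex.Im (alpha1 e - alpha0 e).
  move=> e e0; have -> : alpha1 e - alpha0 e = -(alpha0 e - alpha1 e) by rewrite opprB.
  by rewrite normcN raddfN mulN1r opprK -[X in _ <= X]mul1r; exact: hIm.
have hm1 : (-1 : R[i]^o) = ((-1 : R)%:C)%C by rewrite rmorphN1.
have K01 := key_lim R k01 (fun e => alpha0 e - alpha1 e) 1 1 c (expr1n _ _) (expr1n _ _) c0 hk01 hD hDne hIm.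
have hk02' : k02 e @[e --> 0^'+] --> (((-1 : R)%:C)%C : R[i]^o) by rewrite -hm1.
have hk12' : k12 e @[e --> 0^'+] --> (((-1 : R)%:C)%C : R[i]^o) by rewrite -hm1.
have sN : (-1 : R) ^+ 2 = 1 by rewrite sqrrN expr1n.
have K02 := key_lim R k02 (fun e => alpha0 e - alpha1 e) (-1) 1 c sN (expr1n _ _) c0 hk02' hD hDne hIm.
have K11 := key_lim R k11 (fun e => alpha1 e - alpha0 e) 1 (-1) c (expr1n _ _) sN c0 hk11 hD' hDne' hIm'.
have K12 := key_lim R k12 (fun e => alpha1 e - alpha0 e) (-1) (-1) c sN sN c0 hk12' hD' hDne' hIm'.
split.
- apply/cvgryPge => M; near=> e.
  change (M <= Normc.normc (cexp (L01 e))); rewrite normc_cexp.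
  have h : M <= 1 * 1 * complex.Re (L01 e) by near: e; exact: K01.
  have := expR_ge1Dx (complex.Re (L01 e)); lra.
- apply/cvgryPge => M; near=> e.
  change (M <= Normc.normc (cexp (L12 e))); rewrite normc_cexp.
  have h : M <= -1 * -1 * complex.Re (L12 e) by near: e; exact: K12.
  have := expR_ge1Dx (complex.Re (L12 e)); lra.
- apply/cvgCP => r r0; near=> e.
  change (Normc.normc (0 - cexp (L02 e)) < r); rewrite sub0r normcN normc_cexp.
  apply: expR_small r0 _.
  have h : 1 / r <= -1 * 1 * complex.Re (L02 e) by near: e; exact: K02.
  lra.
- apply/cvgCP => r r0; near=> e.
  change (Normc.normc (0 - cexp (L11 e)) < r); rewrite sub0r normcN normc_cexp.
  apply: expR_small r0 _.
  have h : 1 / r <= 1 * -1 * complex.Re (L11 e) by near: e; exact: K11.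
  lra.
have nz : forall k : R -> R[i]^o, k e @[e --> 0^'+] --> (((-1 : R)%:C)%C : R[i]^o) \/ k e @[e --> 0^'+] --> (1 : R[i]^o) ->
    \forall e \near 0^'+, k e != 0.
  move=> k [] /cvgCP /(_ 1 ltr01); apply: filter_app; near=> e => h.
  - apply: (@ne0_of_close _ ((-1 : R)%:C)%C).
    have -> : Normc.normc ((-1 : R)%:C)%C = 1 by rewrite -hm1 normcN Normc.normc1.
    exact: h.
  - by apply: (@ne0_of_close _ 1); rewrite Normc.normc1.
exists (fun e => -(k01 e / k02 e) - 1), (fun e => k01 e / k11 e - 1), (fun e => -(k01 e / k12 e) - 1).
split.
- have L : (fun e => -(k01 e / k02 e) - 1) @ 0^'+ --> (-(1 * (-1)^-1) - 1 : R[i]^o).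
    have hn : (-1 : R[i]^o) != 0 by rewrite oppr_eq0 oner_eq0.
    exact: (cvgB (cvgN (cvgM hk01 (cvgV hn hk02))) (cvg_cst _)).
  by move: L; rewrite invrN1 mulrN1 opprK subrr.
- have L : (fun e => k01 e / k11 e - 1) @ 0^'+ --> (1 * 1^-1 - 1 : R[i]^o).
    have hn : (1 : R[i]^o) != 0 by rewrite oner_eq0.
    exact: (cvgB (cvgM hk01 (cvgV hn hk11)) (cvg_cst _)).
  by move: L; rewrite invr1 mulr1 subrr.
- have L : (fun e => -(k01 e / k12 e) - 1) @ 0^'+ --> (-(1 * (-1)^-1) - 1 : R[i]^o).
    have hn : (-1 : R[i]^o) != 0 by rewrite oppr_eq0 oner_eq0.
    exact: (cvgB (cvgN (cvgM hk01 (cvgV hn hk12))) (cvg_cst _)).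
  by move: L; rewrite invrN1 mulrN1 opprK subrr.
- near=> e.
  have pe : 0 < e by near: e; exact: nbhs_right_gt.
  have n2 : k02 e != 0 by near: e; apply: nz; left.
  have n1 : k11 e != 0 by near: e; apply: nz; right.
  have n3 : k12 e != 0 by near: e; apply: nz; left.
  have d1 := hDne e pe.
  have d2 := hDne' e pe.
  have E1 : forall (P a b D : R[i]), b != 0 -> D != 0 -> P * (a / D) = - (1 + (- (a / b) - 1)) * (P * (b / D)).
    by move=> P a b D hb hD0; field; rewrite ?oppr_eq0 hb hD0.
  have E2 : forall (P a b D : R[i]), b != 0 -> D != 0 -> P * (a / D) = - (1 + (a / b - 1)) * (P * (b / (- D))).
    by move=> P a b D hb hD0; field; rewrite ?oppr_eq0 hb hD0.
  have E3 : forall (P a b D : R[i]), b != 0 -> D != 0 -> P * (a / D) = (1 + (- (a / b) - 1)) * (P * (b / (- D))).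
    by move=> P a b D hb hD0; field; rewrite ?oppr_eq0 hb hD0.
  have hopp : alpha1 e - alpha0 e = -(alpha0 e - alpha1 e) by rewrite opprB.
  split; rewrite /L01 /L02 /L11 /L12 /ln_lambda /char_rho ?hopp.
  + exact: E1.
  + exact: E2.
  + exact: E3.
Unshelve. all: by end_near. Qed.
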